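(* Suppose the Hasse diagram $\Gamma$ of $\rho$ consists of vertices $1,\dots,m+p$ ($m\ge3$, $p\ge1$) and exactly two paths from vertex $1$ to vertex $m$: $a_1\cdots a_{m-1}$ through vertices $1,2,\dots,m-1,m$, and $b_1\cdots b_{p+1}$ through vertices $1,m+p,\dots,m+1,m$ (internally disjoint), and no other arrows. Then for every group $G$, every transitive function $u:\rho\to G$ is trivial.
   Context: $\rho$ is a preorder on a finite set; $\mathcal C$ the poset of its equivalence classes ($i\sim j$ iff $i\rho j$ and $j\rho i$; $\hat i\le\hat j$ iff $i\rho j$). $\Gamma$ is the directed graph with vertex set $\mathcal C$ and an arrow from $\alpha$ to $\beta$ iff $\alpha<\beta$ with nothing strictly between. A transitive function on $\rho$ with values in $G$ is $u:\rho\to G$ with $u(i,j)u(j,r)=u(i,r)$ whenever $i\rho j$, $j\rho r$; it is trivial if there are $g_i\in G$ with $u(i,j)=g_ig_j^{-1}$ for all $i\rho j$. *)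

(* Defs.v *)
From mathcomp Require Import all_boot.
Set Implicit Arguments. Unset Strict Implicit. Unset Printing Implicit Defensive.

Record Grp := {
  gcarrier :> Type;
  gmul : gcarrier -> gcarrier -> gcarrier;
  gone : gcarrier;
  ginv : gcarrier -> gcarrier;
  gmulA : forall x y z, gmul x (gmul y z) = gmul (gmul x y) z;
  gmul1 : forall x, gmul gone x = x;
  gmulV : forall x, gmul (ginv x) x = gone
}.

Definition is_preorder (T : finType) (rho : rel T) :=
  reflexive rho /\ transitive rho.

(* Strict order on equivalence classes, read on representatives:
   hat i < hat j  iff  i rho j and not j rho i. *)
Definition cls_lt (T : finType) (rho : rel T) (i j : T) : bool :=
  rho i j && ~~ rho j i.

Definition hasse_arrow (T : finType) (rho : rel T) (i j : T) : bool :=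
  cls_lt rho i j && ~~ [exists k, cls_lt rho i k && cls_lt rho k j].

(* The model graph on vertices 1..m+p, encoded 0-indexed on 'I_(m+p)
   (vertex v is encoded as v-1). Arrows:
     a_k : k -> k+1 (k = 1..m-1);
     b   : 1 -> m+p, (k+1) -> k (k = m+1..m+p-1), m+1 -> m. *)
Definition model_arrow (m p : nat) (x y : 'I_(m + p)) : bool :=
  [|| (y == x.+1 :> nat) && (x < m.-1),
      (x == 0 :> nat) && (y == (m + p).-1 :> nat),
      (m <= y) && (x == y.+1 :> nat)
    | (x == m :> nat) && (y == m.-1 :> nat)].

Definition hasse_is_model (T : finType) (rho : rel T) (m p : nat) :=
  exists phi : T -> 'I_(m + p),
    [/\ forall v, exists i, phi i = v,
        forall i j, (phi i == phi j) = (rho i j && rho j i)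
      & forall i j, hasse_arrow rho i j = model_arrow (phi i) (phi j)].

(* Transitive function on rho with values in G (only its values on pairs
   i rho j matter). *)
Definition transitive_fun (T : finType) (rho : rel T) (G : Grp)
    (u : T -> T -> G) :=
  forall i j r, rho i j -> rho j r -> gmul (u i j) (u j r) = u i r.

Definition trivial_fun (T : finType) (rho : rel T) (G : Grp)
    (u : T -> T -> G) :=
  exists g : T -> G, forall i j, rho i j -> u i j = gmul (g i) (ginv (g j)).

(* Main.v *)
Require Import Defs.
From mathcomp Require Import all_boot.
From mathcomp Require Import zify.

Section G.
Variable G : Grp.
Lemma mulKg' (x y : G) : gmul (ginv x) (gmul x y) = y.
Proof. by rewrite gmulA gmulV gmul1. Qed.
Lemma mulgV' (x : G) : gmul x (ginv x) = gone G.
Proof.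
rewrite -[gmul x _]gmul1 -(gmulV (ginv x)) -gmulA.
by rewrite [gmul (ginv x) (gmul x _)]gmulA gmulV gmul1 gmulV.
Qed.
Lemma invgK' (x : G) : ginv (ginv x) = x.
Proof.
have h := mulKg' (ginv x) x; rewrite gmulV -(mulgV' (ginv x)) gmulA gmulV gmul1 in h.
exact: h.
Qed.
End G.

Lemma in_arrow (m p : nat) (y : 'I_(m + p)) : 3 <= m -> 1 <= p -> y != 0 :> nat ->
  exists x : 'I_(m + p), model_arrow x y.
Proof.
move=> hm hp hy.
have hyl := ltn_ord y.
case: (ltnP y m) => h1.
  have hx : y.-1 < m + p by apply: leq_ltn_trans hyl; exact: leq_pred.
  exists (Ordinal hx); rewrite /model_arrow /=.
  rewrite prednK ?lt0n // eqxx /=.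
  have -> : y <= m.-1 by lia.
  done.
case: (ltnP y.+1 (m + p)) => h2.
  exists (Ordinal h2); rewrite /model_arrow /= h1 ?eqxx /=.
  by rewrite !orbT.
have hx : 0 < m + p by apply: leq_trans hp _; exact: leq_addl.
exists (Ordinal hx); rewrite /model_arrow /=.
have -> : y == (m + p).-1 :> nat by apply/eqP; lia.
by rewrite orbT.
Qed.

Theorem mainTheorem13 (T : finType) (rho : rel T) (m p : nat) :
  is_preorder rho -> 3 <= m -> 1 <= p -> hasse_is_model rho m p ->
  forall (G : Grp) (u : T -> T -> G),
    transitive_fun rho u -> trivial_fun rho u.
Proof.
move=> [refl tr] hm hp [phi [surj heq harr]] G u hu.
have hx0 : 0 < m + p by apply: leq_trans hp _; exact: leq_addl.
have [b hb] := surj (Ordinal hx0).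
have bot : forall i, rho b i.
  have key : forall n i, #|[pred k | cls_lt rho k i]| < n -> rho b i.
    elim=> [//|n IH] i hn.
    case: (pickP [pred k | cls_lt rho k i]) => [k hk | hnone].
      apply: (tr k); last by move: hk => /= /andP[].
      apply: IH; rewrite -ltnS; apply: leq_trans hn; rewrite ltnS; apply: proper_card.
      apply/properP; split.
        apply/subsetP => z; rewrite !inE => hz.
        move: hz hk => /andP[z1 z2] /andP[k1 k2]; apply/andP; split.
          exact: tr z1 k1.
        by apply/negP => iz; move/negP: z2; apply; exact: tr k1 iz.
      exists k; first by rewrite inE.
      rewrite inE /cls_lt negb_and negbK.
      by rewrite orNb.
    case: (eqVneq (nat_of_ord (phi i)) 0) => hi.
      have : phi b == phi i by rewrite hb; apply/eqP/val_inj => /=; rewrite hi.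
      by rewrite heq => /andP[].
    have [x hx] := @in_arrow m p (phi i) hm hp hi.
    have [j hj] := surj x.
    have := harr j i; rewrite hj hx => /andP[hl _].
    by move: (hnone j); rewrite /= hl.
  by move=> i; exact: (key _ i (ltnSn _)).
exists (fun i => ginv (u b i)) => i j hij.
by rewrite invgK' -(hu b i j (bot i) hij) mulKg'.
Qed.
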